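(* Let $X$ be a real reflexive Banach space, $f:X\to\mathbb{R}\cup\{+\infty\}$ a lower semicontinuous proper convex function, $f^{FY}(x,x^{\ast}):=f(x)+f^{\ast}(x^{\ast})$, and let $h\in\mathcal{H}(\partial f)$ satisfy $h\le f^{FY}$. Then for every $\epsilon>0$ and $x\in X$, $\breve{T}_h(\tfrac{\epsilon}{2},x)\subset\partial_\epsilon f(x)$.
   Context: $X^{\ast}$ is the dual of $X$ with pairing $\langle\cdot,\cdot\rangle$; $f^{\ast}(x^{\ast})=\sup_x\{\langle x,x^{\ast}\rangle-f(x)\}$, $\partial f$ is the convex subdifferential, and $\partial_\epsilon f(x)=\{x^{\ast}:f(y)-f(x)\ge\langle y-x,x^{\ast}\rangle-\epsilon\ \forall y\}$ if $f(x)<\infty$, $\emptyset$ otherwise. The dual of $X\times X^{\ast}$ is identified with $X^{\ast}\times X$ via $\langle (x,x^{\ast}),(y^{\ast},y)\rangle=\langle x,y^{\ast}\rangle+\langle y,x^{\ast}\rangle$. For a maximally monotone $T$, $\mathcal{H}(T)$ is the family of lower semicontinuous convex $h:X\times X^{\ast}\to\mathbb{R}\cup\{+\infty\}$ with $h(x,x^{\ast})\ge\langle x,x^{\ast}\rangle$ everywhere and equality whenever $x^{\ast}\in T(x)$. For $\eta\ge0$, $\partial_\eta h(z)$ is the set of $(y^{\ast},y)\in X^{\ast}\times X$ with $h(w,w^{\ast})\ge h(z)+\langle (w,w^{\ast})-z,(y^{\ast},y)\rangle-\eta$ for all $(w,w^{\ast})$ when $h(z)<\infty$, and $\emptyset$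 otherwise; $\breve{T}_h(\epsilon,x):=\{x^{\ast}:(x^{\ast},x)\in\partial_{2\epsilon}h(x,x^{\ast})\}$. *)

(* Defs.v *)
From HB Require Import structures.
From mathcomp Require Import all_boot all_order all_algebra.
From mathcomp Require Import all_classical all_reals.
From mathcomp Require Import ereal topology normedtype.
Set Implicit Arguments. Unset Strict Implicit. Unset Printing Implicit Defensive.
Import Order.TTheory GRing.Theory Num.Theory.
Import numFieldNormedType.Exports.
Local Open Scope classical_set_scope.
Local Open Scope ring_scope.

(* The (topological) dual X^{*} of a real normed space X: continuous linear
   functionals X -> R.  The pairing <x, x^{*}> is application x^{*} x. *)
Record dual (R : realType) (X : normedModType R) := Dual {
  dual_fun :> X -> R ;
  dual_additive : forall x y, dual_fun (x + y) = dual_fun x + dual_fun y ;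
  dual_scalable : forall (t : R) x, dual_fun (t *: x) = t * dual_fun x ;
  dual_continuous : continuous dual_fun }.

Section Defs.
Variables (R : realType) (X : normedModType R).
Local Notation Xs := (dual X).

Definition dual_norm_le (a : Xs) (c : R) := forall z : X, `|a z| <= c * `|z|.

Definition dual_dist_lt (a b : Xs) (d : R) :=
  exists2 c, c < d & forall z : X, `|a z - b z| <= c * `|z|.

(* Reflexivity: the canonical embedding J : X -> X^{**} is onto, i.e. every
   continuous (= bounded) linear functional on the normed dual X^{*} is the evaluation
   at some point of X. *)
Definition reflexive_space :=
  forall phi : Xs -> R,
    (forall a b c : Xs, (forall z, c z = a z + b z) -> phi c = phi a + phi b) ->
    (forall (t : R) (a b : Xs), (forall z, b z = t * a z) -> phi b = t * phi a) ->
    (exists M : R, forall (a : Xs) (c : R), 0 <= c -> dual_norm_le a c ->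
        `|phi a| <= M * c) ->
    exists x : X, forall a : Xs, phi a = a x.

Local Open Scope ereal_scope.

Definition proper_fun (f : X -> \bar R) :=
  (forall x, f x != -oo) /\ exists x, f x \is a fin_num.

Definition convex_fun (f : X -> \bar R) :=
  forall (x y : X) (t : R), (0 < t < 1)%R ->
    f (t *: x + (1 - t) *: y)%R <= t%:E * f x + (1 - t)%R%:E * f y.

Definition fconj (f : X -> \bar R) (a : Xs) : \bar R :=
  ereal_sup [set (a x)%:E - f x | x in [set: X]].

Definition fFY (f : X -> \bar R) (p : X * Xs) : \bar R := f p.1 + fconj f p.2.

Definition eps_subdiff (f : X -> \bar R) (eps : R) (x : X) : set Xs :=
  [set a | f x \is a fin_num /\
     forall y : X, f y - f x >= (a y - a x - eps)%R%:E].

Definition subdiff (f : X -> \bar R) (x : X) : set Xs := eps_subdiff f 0 x.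

(* lower semicontinuity on X x X^{*} for the (strong) norm topology *)
Definition lsc_XXs (h : X * Xs -> \bar R) :=
  forall (x : X) (a : Xs) (r : R), r%:E < h (x, a) ->
    exists2 d : R, (0 < d)%R & forall (y : X) (b : Xs),
      (`|y - x| < d)%R -> dual_dist_lt b a d -> r%:E < h (y, b).

(* convexity on X x X^{*} (the convex combination in X^{*} written pointwise) *)
Definition convex_XXs (h : X * Xs -> \bar R) :=
  forall (x y : X) (a b c : Xs) (t : R), (0 < t < 1)%R ->
    (forall z, c z = t * a z + (1 - t) * b z)%R ->
    h ((t *: x + (1 - t) *: y)%R, c) <= t%:E * h (x, a) + (1 - t)%R%:E * h (y, b).

Definition HT (T : X -> set Xs) (h : X * Xs -> \bar R) :=
  (forall p, h p != -oo) /\ lsc_XXs h /\ convex_XXs h /\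
  (forall (x : X) (a : Xs), (a x)%:E <= h (x, a)) /\
  (forall (x : X) (a : Xs), T x a -> h (x, a) = (a x)%:E).

Definition eps_subdiff_h (h : X * Xs -> \bar R) (eta : R) (z : X * Xs)
    : set (Xs * X) :=
  [set q : Xs * X | h z \is a fin_num /\
     forall (w : X) (ws : Xs),
       h (w, ws) >= h z + (q.1 w - q.1 z.1 + ws q.2 - z.2 q.2 - eta)%R%:E].

Definition breveT (h : X * Xs -> \bar R) (eps : R) (x : X) : set Xs :=
  [set a | eps_subdiff_h h (2 * eps)%R (x, a) (a, x)].

End Defs.

(* Main.v *)
Require Import Defs.
From HB Require Import structures.
From mathcomp Require Import all_boot all_order all_algebra.
From mathcomp Require Import all_classical all_reals.
From mathcomp Require Import ereal topology normedtype.
Import Order.TTheory GRing.Theory Num.Theory.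
Import numFieldNormedType.Exports.
Local Open Scope classical_set_scope.
Local Open Scope ring_scope.
From mathcomp Require Import ring lra.
Section HB.
Variables (R : realType) (V : lmodType R).

Definition sublin (q : V -> R) :=
  (forall u v, q (u + v) <= q u + q v) /\
  (forall (t : R) v, 0 < t -> q (t *: v) = t * q v).

Lemma sublin0 q : sublin q -> q 0 = 0.
Proof.
move=> [_ hq]; have := hq 2 0 (ltr0Sn _ 1); rewrite scaler0 => h; lra.
Qed.

Lemma sublinZ0 q : sublin q -> forall (t : R) v, 0 <= t -> q (t *: v) = t * q v.
Proof.
move=> sq t v; rewrite le_eqVlt => /orP[/eqP<-|t0]; last exact: sq.2.
by rewrite scale0r mul0r sublin0.
Qed.

Lemma sublinN q : sublin q -> forall v, - q (- v) <= q v.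
Proof.
move=> sq v; have := sq.1 v (- v); rewrite subrr sublin0 //; lra.
Qed.

Lemma inf_le_elt (E : set R) e b : (forall y, E y -> b <= y) -> E e -> inf E <= e.
Proof. by move=> hb Ee; apply: (ge_inf _ Ee); exists b. Qed.

Lemma le_inf_all (E : set R) x : E !=set0 -> (forall y, E y -> x <= y) -> x <= inf E.
Proof. by move=> ne hb; apply: lb_le_inf. Qed.

Lemma min_odd q : sublin q ->
  (forall q', sublin q' -> (forall v, q' v <= q v) -> forall v, q v <= q' v) ->
  forall x, q (- x) = - q x.
Proof.
move=> sq qmin x.
pose E y := [set q (y + t *: x) - t * q x | t in [set t : R | 0 <= t]].
pose qx y := inf (E y).
have Elb y r : E y r -> - q (- y) <= r.
  case=> t t0 <-; have := sq.1 (y + t *: x) (- y).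
  have -> : y + t *: x + - y = t *: x by rewrite addrC addKr.
  rewrite sublinZ0 //; lra.
have En0 y : E y !=set0.
  by exists (q y); exists 0; [rewrite /= | rewrite scale0r addr0 mul0r subr0].
have hinf y : has_inf (E y) by split => //; exists (- q (- y)) => r /Elb.
have qx_le y t : 0 <= t -> qx y <= q (y + t *: x) - t * q x.
  by move=> t0; rewrite /qx; apply: (@inf_le_elt (E y) _ (- q (- y)) (@Elb y)); exists t.
have le_qx y b : (forall t, 0 <= t -> b <= q (y + t *: x) - t * q x) -> b <= qx y.
  by move=> H; apply: le_inf_all => // _ [t t0 <-]; exact: H.
have sqx : sublin qx.
  split.
  - move=> u v; apply/ler_addgt0Pr => e e0.
    have e20 : 0 < e / 2 by rewrite divr_gt0.
    have [_ [t1 t10 <-] r1lt] := inf_adherent e20 (hinf u).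
    have [_ [t2 t20 <-] r2lt] := inf_adherent e20 (hinf v).
    have := qx_le (u + v) (t1 + t2) (addr_ge0 t10 t20).
    have -> : u + v + (t1 + t2) *: x = (u + t1 *: x) + (v + t2 *: x).
      by rewrite scalerDl addrACA.
    have := sq.1 (u + t1 *: x) (v + t2 *: x).
    rewrite /qx in r1lt r2lt *; lra.
  - move=> t v t0; apply/eqP; rewrite eq_le; apply/andP; split.
    + rewrite -ler_pdivrMl //; apply: le_qx => s s0.
      have := qx_le (t *: v) (t * s) (mulr_ge0 (ltW t0) s0).
      rewrite -scalerA -scalerDr sq.2 // => h.
      rewrite ler_pdivrMl // mulrBr mulrA; exact: h.
    + apply: le_qx => s s0.
      have := qx_le v (s / t) (divr_ge0 s0 (ltW t0)).
      rewrite -(ler_pM2l t0) => h; apply: (le_trans h).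
      have e : t * (s / t) = s by rewrite mulrCA divff ?mulr1 // gt_eqF.
      by rewrite mulrBr -sq.2 // scalerDr scalerA e mulrA e.
have qxq y : qx y <= q y.
  by have := qx_le y 0 (lexx 0); rewrite scale0r addr0 mul0r subr0.
have h1 := qmin qx sqx qxq (- x).
have := qx_le (- x) 1 ler01; rewrite scale1r addNr sublin0 // mul1r.
have := sublinN _ sq x; rewrite /qx in h1 *.
move=> h2 h3; apply/eqP; rewrite eq_le; apply/andP; split; lra.
Qed.

Lemma odd_lin q : sublin q -> (forall x, q (- x) = - q x) ->
  (forall u v, q (u + v) = q u + q v) /\ (forall (t : R) v, q (t *: v) = t * q v).
Proof.
move=> sq hodd; split.
- move=> u v; have := sq.1 u v; have := sq.1 (- u) (- v).
  rewrite -opprD !hodd => h1 h2; apply/eqP; rewrite eq_le; apply/andP; split; lra.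
- move=> t v; case: (ltgtP t 0) => [t0||->]; last by rewrite scale0r mul0r sublin0.
  + have -> : t *: v = (- t) *: (- v) by rewrite scaleNr scalerN opprK.
    by rewrite sq.2 ?oppr_gt0 // hodd mulrNN.
  + by move=> t0; rewrite sq.2.
Qed.

Theorem hahn_banach p : sublin p -> exists L : V -> R,
  [/\ forall u v, L (u + v) = L u + L v,
      forall (t : R) v, L (t *: v) = t * L v & forall v, L v <= p v].
Proof.
move=> sp.
pose T := {q : V -> R | sublin q /\ forall v, q v <= p v}.
have pT : sublin p /\ forall v, p v <= p v by split => // v.
pose t0 : T := exist _ p pT.
pose Rl (s t : T) := `[< forall v, sval t v <= sval s v >].
have [| | |m mmax] := @ZL_preorder T t0 Rl.
- by move=> t; apply/asboolP.
- move=> a b c /asboolP ab /asboolP bc; apply/asboolP => v.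
  exact: le_trans (bc v) (ab v).
- move=> A Atot.
  pose E v := [set r | r = p v \/ exists2 s, A s & r = sval s v].
  pose m v := inf (E v).
  have Elb v r : E v r -> - p (- v) <= r.
    case=> [->|[s _ ->]]; first exact: sublinN _ sp v.
    case: s => q [sq qp] /=; have := sublinN _ sq v; have := qp (- v); lra.
  have En0 v : E v !=set0 by exists (p v); left.
  have hinf v : has_inf (E v) by split => //; exists (- p (- v)) => r /Elb.
  have m_le v r : E v r -> m v <= r by move=> H; apply: (@inf_le_elt (E v) _ (- p (- v)) (@Elb v)).
  have fam w r : E w r -> exists2 k, sublin k /\ (forall w', E w' (k w')) & r = k w.
    case=> [->|[s As ->]]; first by exists p => //; split => // w'; left.
    by exists (sval s) => //; split; [exact: (svalP s).1| move=> w'; right; exists s].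
  have sm : sublin m.
    split.
    + move=> u v; apply/ler_addgt0Pr => e e0.
      have e20 : 0 < e / 2 by rewrite divr_gt0.
      have [r1 Er1 r1lt] := inf_adherent e20 (hinf u).
      have [r2 Er2 r2lt] := inf_adherent e20 (hinf v).
      suff [k [sk kE ku kv]] : exists k, [/\ sublin k, forall w, E w (k w),
          k u <= r1 & k v <= r2].
        have := m_le _ _ (kE (u + v)); have := sk.1 u v.
        rewrite /m in r1lt r2lt *; lra.
      case: Er1 => [->|[s1 As1 ->]]; case: Er2 => [->|[s2 As2 ->]].
      * by exists p; split => // w; left.
      * exists (sval s2); split => //; first exact: (svalP s2).1.
        - by move=> w; right; exists s2.
        - exact: (svalP s2).2.
      * exists (sval s1); split => //; first exact: (svalP s1).1.
        - by move=> w; right; exists s1.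
        - exact: (svalP s1).2.
      * have [/asboolP h|/asboolP h] := Atot s1 s2 As1 As2.
        - exists (sval s2); split => //; first exact: (svalP s2).1.
          by move=> w; right; exists s2.
        - exists (sval s1); split => //; first exact: (svalP s1).1.
          by move=> w; right; exists s1.
    + move=> t v tpos; apply/eqP; rewrite eq_le; apply/andP; split.
      * rewrite -ler_pdivrMl //; apply: le_inf_all => // r /fam [k [sk kE] ->].
        rewrite ler_pdivrMl // -sk.2 //; exact: m_le.
      * apply: le_inf_all => // r /fam [k [sk kE] ->].
        rewrite sk.2 // ler_pM2l //; exact: m_le.
  have mp v : m v <= p v by apply: m_le; left.
  exists (exist _ m (conj sm mp)) => s As; apply/asboolP => v /=.
  by apply: m_le; right; exists s.
- case: m mmax => q [sq qp] /= mmax.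
  have hmin : forall q', sublin q' -> (forall v, q' v <= q v) -> forall v, q v <= q' v.
    move=> q' sq' q'q.
    have q'p : forall v, q' v <= p v by move=> v; exact: le_trans (q'q v) (qp v).
    have /mmax /asboolP // : Rl (exist _ q (conj sq qp)) (exist _ q' (conj sq' q'p)).
    by apply/asboolP.
  have [ha hs] := odd_lin _ sq (min_odd _ sq hmin).
  by exists q; split.
Qed.

End HB.
Section Conv.
Variables (R : realType) (X : normedModType R).

Lemma lsc_ball (f : X -> \bar R) x (a : R) : lower_semicontinuous f ->
  (a%:E < f x)%E -> exists2 r : R, (0 < r)%R & forall z, (`|x - z| < r)%R -> (a%:E < f z)%E.
Proof.
move=> lscf /lscf [V /nbhs_ballP [r r0 Vr] HV]; exists r => // z hz.
by apply: HV; apply: Vr; rewrite -ball_normE /=.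
Qed.

Lemma growth (f : X -> \bar R) y0 : lower_semicontinuous f ->
  (forall x, f x != -oo%E) -> convex_fun f -> f y0 \is a fin_num ->
  exists c0 K : R, (0 <= K)%R /\ forall y, ((c0 - K * `|y - y0|)%:E <= f y)%E.
Proof.
move=> lscf fnm convf fy0.
set a := fine (f y0).
have ha : f y0 = a%:E by rewrite /a fineK.
have [r r0 hball] := @lsc_ball f y0 (a - 1)%R lscf (ltac:(rewrite ha lte_fin; lra)).
exists (a - 1)%R, (2 / r)%R; split; first by rewrite divr_ge0 // ltW.
move=> y; set d := `|y - y0|.
have d0' : (0 <= d)%R by rewrite normr_ge0.
have K0 : (0 <= 2 / r)%R by rewrite divr_ge0 // ltW.
case: (ltP d r) => hyr.
- have hyr' : `|y0 - y| < r by rewrite distrC.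
  have := hball y hyr'; move=> /ltW h; apply: le_trans h.
  rewrite lee_fin; have : (0 <= 2 / r * d)%R by apply: mulr_ge0.
  lra.
- have d0 : (0 < d)%R by apply: lt_le_trans hyr.
  set s := (r / (2 * d))%R.
  have s0 : (0 < s)%R by rewrite /s divr_gt0 // mulr_gt0.
  have s1 : (s < 1)%R by rewrite /s ltr_pdivrMr ?mulr_gt0 //; lra.
  have := convf y y0 s (ltac:(by rewrite s0 s1)).
  have hy' : (`|y0 - (s *: y + (1 - s) *: y0)| < r)%R.
    have -> : (y0 - (s *: y + (1 - s) *: y0) = s *: (y0 - y))%R.
      by rewrite scalerBl scale1r !scalerBr opprD opprB addrA addrC addrA subrK.
    rewrite normrZ gtr0_norm // distrC /s -/d.
    have -> : (r / (2 * d) * d = r / 2)%R.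
      by field; rewrite gt_eqF.

    lra.
  have := hball _ hy'.
  move=> h1 h2; have {h1 h2} h := lt_le_trans h1 h2.
  move: h; rewrite ha.
  case Hfy: (f y) => [b| |] //; last by move: (fnm y); rewrite Hfy.
  + rewrite -!EFinM -EFinD !lte_fin lee_fin => h.
    have e : (s * (2 / r * d) = 1)%R.
      by rewrite /s; field; rewrite ?gt_eqF // ?mulf_neq0 // gt_eqF.
    have : (s * (a - b) < s * (2 / r * d))%R by rewrite e; lra.
    rewrite ltr_pM2l //; lra.
  + by move=> _; rewrite leey.
Qed.


Lemma le_inf_all' (E : set R) x : E !=set0 -> (forall y, E y -> x <= y) -> x <= inf E.
Proof. by move=> ne hb; apply: lb_le_inf. Qed.

Lemma inf_le_elt' (E : set R) e b : (forall y, E y -> b <= y) -> E e -> inf E <= e.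
Proof. by move=> hb Ee; apply: (ge_inf _ Ee); exists b. Qed.

Lemma lip_minorant (f : X -> \bar R) x (C : R) : lower_semicontinuous f ->
  proper_fun f -> convex_fun f -> (C%:E < f x)%E ->
  exists (phi : X -> R) (M C' : R), [/\ C < C', 0 <= M, C' <= phi x,
    (forall z, ((phi z)%:E <= f z)%E) &
    (and (forall z z', phi z <= phi z' + M * `|z - z'|)
    (forall z1 z2 (t : R), 0 < t < 1 ->
       phi (t *: z1 + (1 - t) *: z2) <= t * phi z1 + (1 - t) * phi z2))].
Proof.
move=> lscf [fnm [y0 fy0]] convf hCx.
have [c0 [K [K0 hK]]] := @growth f y0 lscf fnm convf fy0.
have [C' [CC' C'x]] : exists C', C < C' /\ (C'%:E < f x)%E.
  move: hCx; case Hfx: (f x) => [b| |].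
  - by rewrite lte_fin => h; exists ((C + b) / 2); rewrite lte_fin; split; lra.
  - by move=> _; exists (C + 1); split; [lra | rewrite ltry].
  - by rewrite ltNge leNye.
have [r r0 hr] := @lsc_ball f x C' lscf C'x.
set D := `|x - y0|.
set M := K + 1 + `|C' - c0 + K * D| / r.
have M0 : 0 <= `|C' - c0 + K * D| / r by rewrite divr_ge0 // ltW.
have MK : K + 1 <= M by rewrite /M; lra.
have M0' : 0 <= M by lra.
have eM : M * r - K * r = r + `|C' - c0 + K * D|.
  by rewrite /M; field; rewrite gt_eqF.
pose S z := [set fine (f y) + M * `|z - y| | y in [set y | f y \is a fin_num]].
pose phi z := inf (S z).
have Slb z v : S z v -> c0 - K * `|z - y0| <= v.
  move=> [y fy <-]; have h1 : c0 - K * `|y - y0| <= fine (f y) by rewrite -lee_fin fineK.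
  have h2 := ler_distD z y y0; rewrite (distrC y z) in h2.
  have h3 := ler_wpM2l K0 h2.
  have h4 : K * `|z - y| <= M * `|z - y| by rewrite ler_wpM2r //; lra.
  rewrite mulrDr in h3; lra.
have SNE z : S z !=set0 by exists (fine (f y0) + M * `|z - y0|); exists y0.
have hinf z : has_inf (S z) by split => //; exists (c0 - K * `|z - y0|) => v /Slb.
have phi_le z y : f y \is a fin_num -> phi z <= fine (f y) + M * `|z - y|.
  by move=> fy; apply: (@inf_le_elt' (S z) _ _ (@Slb z)); exists y.
have le_phi z b : (forall y, f y \is a fin_num -> b <= fine (f y) + M * `|z - y|) ->
    b <= phi z.
  by move=> H; apply: le_inf_all' => // _ [y fy <-]; exact: H.
exists phi, M, C'; split; [exact: CC' | exact: M0' | | |].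
- apply: le_phi => y fy.
  have nn : 0 <= M * `|x - y| by rewrite mulr_ge0 ?normr_ge0 //; lra.
  case: (ltP `|x - y| r) => hxy.
  + have : C' < fine (f y) by rewrite -lte_fin fineK //; exact: hr.
    lra.
  + have h1 : c0 - K * `|y - y0| <= fine (f y) by rewrite -lee_fin fineK.
    have h2 := ler_distD x y y0; rewrite (distrC y x) in h2.
    have h3 := ler_wpM2l K0 h2.
    have h4 : (M - K) * r <= (M - K) * `|x - y| by rewrite ler_wpM2l //; lra.
    have h5 := ler_norm (C' - c0 + K * D).
    rewrite mulrDr -/D in h3; rewrite !mulrBl in h4; lra.
- move=> z; case Hfz: (f z) => [b| |].
  + have := phi_le z z; rewrite Hfz subrr normr0 mulr0 addr0 lee_fin; exact.
  + by rewrite leey.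
  + by move: (fnm z); rewrite Hfz.
split.
- move=> z z'; suff : phi z - M * `|z - z'| <= phi z' by lra.
  apply: le_phi => y fy; have h1 := phi_le z y fy.
  have h2 := ler_distD z' z y.
  have h3 : M * `|z - y| <= M * (`|z - z'| + `|z' - y|) by rewrite ler_wpM2l //; lra.
  rewrite mulrDr in h3; lra.
- move=> z1 z2 t /andP[t0 t1].
  apply/ler_addgt0Pr => e e0.
  have [_ [y1 fy1 <-] h1] := inf_adherent e0 (hinf z1).
  have [_ [y2 fy2 <-] h2] := inf_adherent e0 (hinf z2).
  set y := t *: y1 + (1 - t) *: y2.
  have hy := convf y1 y2 t (ltac:(by rewrite t0 t1)).
  rewrite -/y -(fineK fy1) -(fineK fy2) -!EFinM -EFinD in hy.
  have [fy hfy] : f y \is a fin_num /\ fine (f y) <= t * fine (f y1) + (1 - t) * fine (f y2).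
    move: hy; case Hfy: (f y) => [b| |] //; try by rewrite lee_fin.
    by move: (fnm y); rewrite Hfy.
  have h3 := phi_le (t *: z1 + (1 - t) *: z2) y fy.
  have ez : t *: z1 + (1 - t) *: z2 - y = t *: (z1 - y1) + (1 - t) *: (z2 - y2).
    by rewrite /y !scalerBr opprD addrACA.
  rewrite ez in h3.
  have h4 := ler_normD (t *: (z1 - y1)) ((1 - t) *: (z2 - y2)).
  rewrite !normrZ !ger0_norm in h4; [|lra|lra].
  have h5 := ler_wpM2l M0' h4.
  have h6 : t * (fine (f y1) + M * `|z1 - y1|) <= t * (phi z1 + e).
    by rewrite ler_wpM2l //; [lra|lra].
  have h7 : (1 - t) * (fine (f y2) + M * `|z2 - y2|) <= (1 - t) * (phi z2 + e).
    by rewrite ler_wpM2l //; [lra|lra].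
  rewrite /phi in h1 h2 h3 h6 h7 *.
  rewrite !mulrDr in h5 h6 h7; rewrite !mulrA in h5 h6 h7 h3.
  rewrite [M * t]mulrC [M * (1 - t)]mulrC in h5.
  lra.
Qed.

End Conv.

Section Sub.
Variables (R : realType) (X : normedModType R).

Lemma dual_of (L : X -> R) (M : R) : 0 <= M ->
  (forall u v, L (u + v) = L u + L v) -> (forall (t : R) v, L (t *: v) = t * L v) ->
  (forall v, `|L v| <= M * `|v|) -> exists a : dual X, forall v, a v = L v.
Proof.
move=> M0 La Ls Lb.
have Lc : continuous L.
  move=> z; apply/cvgrPdist_lt => e e0.
  apply/nbhs_ballP; exists (e / (M + 1)); first by apply: divr_gt0 => //; lra.
  move=> w; rewrite -ball_normE /= => hw.
  have -> : L z - L w = L (z - w) by rewrite La -[- w]scaleN1r Ls mulN1r.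
  have := Lb (z - w); rewrite ltr_pdivlMr in hw; last lra.
  have := normr_ge0 (z - w); rewrite mulrDr mulr1 in hw; lra.
by exists (Dual La Ls Lc).
Qed.

Lemma conv_at (phi : X -> R) :
  (forall z1 z2 (t : R), 0 < t < 1 ->
     phi (t *: z1 + (1 - t) *: z2) <= t * phi z1 + (1 - t) * phi z2) ->
  forall (l : R) u w z, 0 < l < 1 -> l *: u + (1 - l) *: w = z ->
  phi z <= l * phi u + (1 - l) * phi w.
Proof. by move=> hc l u w z hl <-; exact: hc. Qed.

Lemma subgrad (phi : X -> R) (M : R) x : 0 <= M ->
  (forall z z', phi z <= phi z' + M * `|z - z'|) ->
  (forall z1 z2 (t : R), 0 < t < 1 ->
     phi (t *: z1 + (1 - t) *: z2) <= t * phi z1 + (1 - t) * phi z2) ->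
  exists a : dual X, forall z, a z - a x <= phi z - phi x.
Proof.
move=> M0 lip cv.
pose q v t := (phi (x + t *: v) - phi x) / t.
pose E v := [set q v t | t in [set t : R | 0 < t]].
pose p v := inf (E v).
have qlb v t : 0 < t -> phi x - phi (x - v) <= q v t.
  move=> t0; set l := 1 / (1 + t).
  have l0 : 0 < l by rewrite /l divr_gt0 //; lra.
  have l1 : l < 1 by rewrite /l ltr_pdivrMr; lra.
  have hl : 0 < l < 1 by rewrite l0 l1.
  have ex : l *: (x + t *: v) + (1 - l) *: (x - v) = x.
    rewrite scalerDr scalerBr scalerA addrACA -scalerDl -scalerBl.
    have -> : l + (1 - l) = 1 by lra.
    have -> : l * t - (1 - l) = 0 by rewrite /l; field; lra.
    by rewrite scale1r scale0r addr0.
  have h := @conv_at phi cv _ _ _ _ hl ex.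
  have h2 : (1 + t) * phi x <= (1 + t) * (l * phi (x + t *: v) + (1 - l) * phi (x - v)).
    by rewrite ler_wpM2l //; lra.
  have e2 : (1 + t) * (l * phi (x + t *: v) + (1 - l) * phi (x - v)) =
            phi (x + t *: v) + t * phi (x - v) by rewrite /l; field; lra.
  rewrite e2 in h2; rewrite /q ler_pdivlMr //; lra.
have qmono v s t : 0 < s -> s <= t -> q v s <= q v t.
  move=> s0; rewrite le_eqVlt => /orP[/eqP -> //|st].
  have t0 : 0 < t by exact: lt_trans s0 st.
  set l := s / t.
  have hl : 0 < l < 1 by rewrite /l divr_gt0 //= ltr_pdivrMr // mul1r.
  have ex : l *: (x + t *: v) + (1 - l) *: x = x + s *: v.
    rewrite scalerDr scalerA addrAC -scalerDl.
    have -> : l + (1 - l) = 1 by lra.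
    have -> : l * t = s by rewrite /l; field; rewrite gt_eqF.
    by rewrite scale1r.
  have h := @conv_at phi cv _ _ _ _ hl ex.
  rewrite /q ler_pdivrMr // mulrAC -mulrA -/l; lra.
have En0 v : E v !=set0 by exists (q v 1); exists 1 => //=.
have hinf v : has_inf (E v) by split => //; exists (phi x - phi (x - v)) => _ [t t0 <-]; exact: qlb.
have p_le v t : 0 < t -> p v <= q v t.
  by move=> t0; apply: (@inf_le_elt' R (E v) _ (phi x - phi (x - v))) => [_ [s s0 <-]|]; [exact: qlb|exists t].
have le_p v b : (forall t, 0 < t -> b <= q v t) -> b <= p v.
  by move=> H; apply: le_inf_all' => // _ [t t0 <-]; exact: H.
have sp : @sublin R X p.
  split.
  - move=> u v; apply/ler_addgt0Pr => e e0.
    have e20 : 0 < e / 2 by rewrite divr_gt0.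
    have [_ [t1 t10 <-] h1] := inf_adherent e20 (hinf u).
    have [_ [t2 t20 <-] h2] := inf_adherent e20 (hinf v).
    have [m [m0 m1 m2]] : exists m, [/\ 0 < m, m <= t1 & m <= t2].
      by case: (leP t1 t2) => h; [exists t1 | exists t2]; split => //; lra.
    have h3 := qmono u m t1 m0 m1; have h4 := qmono v m t2 m0 m2.
    have m20 : 0 < m / 2 by rewrite divr_gt0.
    have h5 := p_le (u + v) (m / 2) m20.
    have hl : 0 < (1 / 2 : R) < 1 by apply/andP; split; [apply: divr_gt0 => // | rewrite ltr_pdivrMr //; lra].
    have ex : (1 / 2) *: (x + m *: u) + (1 - 1 / 2) *: (x + m *: v) = x + (m / 2) *: (u + v).
      have -> : 1 - 1 / 2 = 1 / 2 :> R by field.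
      rewrite !scalerDr !scalerA addrACA -scalerDl.
      have -> : 1 / 2 + 1 / 2 = 1 :> R by field.
      have -> : 1 / 2 * m = m / 2 :> R by field.
      by rewrite scale1r.
    have h := @conv_at phi cv _ _ _ _ hl ex.
    have e12 : 1 - 1 / 2 = 1 / 2 :> R by field.
    rewrite e12 in h.
    have h6 : q (u + v) (m / 2) <= q u m + q v m.
      rewrite /q.
      have -> : (phi (x + (m / 2) *: (u + v)) - phi x) / (m / 2) =
          (2 * (phi (x + (m / 2) *: (u + v)) - phi x)) / m by field; rewrite gt_eqF.
      have -> : (phi (x + m *: u) - phi x) / m + (phi (x + m *: v) - phi x) / m =
          (phi (x + m *: u) + phi (x + m *: v) - 2 * phi x) / m by field; rewrite gt_eqF.
      rewrite ler_pM2r ?invr_gt0 //; lra.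
    rewrite /p in h1 h2 h5 *; lra.
  - move=> t v t0.
    have qs s : 0 < s -> q (t *: v) s = t * q v (s * t).
      move=> s0; rewrite /q scalerA; field.
      by rewrite !gt_eqF.
    apply/eqP; rewrite eq_le; apply/andP; split.
    + rewrite -ler_pdivrMl //; apply: le_p => s s0; rewrite ler_pdivrMl //.
      have := p_le (t *: v) (s / t) (divr_gt0 s0 t0).
      by rewrite qs ?divr_gt0 // divfK ?gt_eqF.
    + apply: le_p => s s0; rewrite qs // ler_pM2l //; apply: p_le.
      exact: mulr_gt0.
have plip v : p v <= M * `|v|.
  have := p_le v 1 ltr01; rewrite /q scale1r divr1.
  have := lip (x + v) x; rewrite addrAC subrr add0r; lra.
have [L [La Ls Lp]] := @hahn_banach R X p sp.
have LN v : L (- v) = - L v by rewrite -scaleN1r Ls mulN1r.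
have Lb v : `|L v| <= M * `|v|.
  rewrite ler_norml; apply/andP; split; last exact: le_trans (Lp v) (plip v).
  have := le_trans (Lp (- v)) (plip (- v)); rewrite LN normrN; lra.
have [a ha] := @dual_of L M M0 La Ls Lb.
exists a => z; rewrite !ha.
have -> : L z - L x = L (z - x) by rewrite La LN.
apply: (le_trans (Lp _)); apply: (le_trans (p_le _ 1 ltr01)).
by rewrite /q scale1r divr1 [x + _]addrC subrK.
Qed.

End Sub.

Lemma affine_minorant (R : realType) (X : normedModType R) (f : X -> \bar R) x (C : R) :
  lower_semicontinuous f -> proper_fun f -> convex_fun f -> (C%:E < f x)%E ->
  exists (a : dual X) (c : R), C < c /\ forall z, ((a z - a x + c)%:E <= f z)%E.
Proof.
move=> lscf pf cf hC.
have [phi [M [C' [CC' M0 C'x phif [lip cv]]]]] := @lip_minorant R X f x C lscf pf cf hC.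
have [a ha] := @subgrad R X phi M x M0 lip cv.
exists a, (phi x); split; first lra.
move=> z; apply: le_trans (phif z); rewrite lee_fin; have := ha z; lra.
Qed.

Theorem theorem4p1 (R : realType) (X : completeNormedModType R)
    (f : X -> \bar R) (h : X * dual X -> \bar R) :
  reflexive_space X ->
  lower_semicontinuous f -> proper_fun f -> convex_fun f ->
  HT (subdiff f) h ->
  (forall p, (h p <= fFY f p)%E) ->
  forall (eps : R) (x : X), 0 < eps ->
    breveT h (eps / 2) x `<=` eps_subdiff f eps x.
Proof.
move=> _ lscf pf cf [hnm [hlsc [hcv [hge heq]]]] hle eps x eps0 a [hfin H].
have e2 : 2 * (eps / 2) = eps by field.
set hxa := fine (h (x, a)).
have hxaE : h (x, a) = hxa%:E by rewrite /hxa fineK.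
have hax : a x <= hxa by rewrite -lee_fin -hxaE; exact: hge.
have key y : f y \is a fin_num -> (f x <= (fine (f y) - a y + a x + eps)%:E)%E.
  move=> fy; rewrite leNgt; apply/negP => hlt.
  have [L [c [Cc hc]]] := @affine_minorant R X f x _ lscf pf cf hlt.
  have h1 := H y L; rewrite /= e2 hxaE in h1.
  have h2 := hle (y, L); rewrite /fFY /= in h2.
  have h3 : (fconj f L <= (L x - c)%:E)%E.
    apply: ge_ereal_sup => _ [z _ <-].
    have := hc z; case Hfz: (f z) => [b| |].
    + by rewrite -EFinB !lee_fin => hb; lra.
    + by move=> _; rewrite /= leNye.
    + by move: (pf.1 z); rewrite Hfz.
  have h4 := le_trans h1 (le_trans h2 (leeD2l (f y) h3)).
  rewrite -(fineK fy) -EFinD lee_fin in h4.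
  have fyv : fine (f y) = fine (f y) by [].
  lra.
have [y0 fy0] := pf.2.
have fxfin : f x \is a fin_num.
  have := key y0 fy0; case Hfx: (f x) => [b| |].
  + by [].
  + by rewrite leNgt ltey.
  + by move: (pf.1 x); rewrite Hfx.
split => // y.
case Hfy: (f y) => [b| |].
- have := key y (ltac:(by rewrite Hfy)); rewrite Hfy /= -(fineK fxfin) => hk.
  by rewrite -EFinB lee_fin; rewrite lee_fin in hk; lra.
- by rewrite -(fineK fxfin) /= leey.
- by move: (pf.1 y); rewrite Hfy.
Qed.
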